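(* For every odd $N\ge3$ we have ${}'\mathcal X^+_{N-2}={}^\sharp\mathcal X^+_{N-2}$.
   Context: For an odd integer $M\ge3$ the following objects are defined (we write $[i,j]=\{h\in\mathbb Z:i\le h\le j\}$, empty if $i>j$). A $2$-element subset $\{i,j\}\subseteq[1,M]$ is written $ij$ when either ($i<j$ and $j-i$ odd) or ($i>j$ and $i-j$ even); each $2$-element subset has exactly one such writing. Let $\mathcal P_M$ be the set of all finite sets $B$ of pairwise disjoint $2$-element subsets of $[1,M]$; for $B\in\mathcal P_M$ let $\mathrm{supp}(B)=\bigcup_{X\in B}X$, $B^0=\{\{i,j\}\in B: i-j\text{ even}\}$, $B^1=\{\{i,j\}\in B: i-j\text{ odd}\}$. A set $X\subseteq[1,M]$ is $0$-covered (resp. $1$-covered) by $B^1$ if there are $a_1b_1,\dots,a_sb_s\in B^1$ ($s\ge0$, so $a_r<b_r$) with $X=[a_1,b_1]\sqcup\dots\sqcup[a_s,b_s]$ (resp. $X=[a_1,b_1]\sqcup\dots\sqcup[a_s,b_s]\sqcup\{u\}$), disjoint unions. Let ${}^*\mathcal P_M$ be the set of $B\in\mathcal P_M$ such that: for every $ij\in B^1$, $[i+1,j-1]$ is $0$-covered by $B^1$; and there is a sequence $(i_1,\dots,i_{2s})$ in $[1,M]$ with $B^0=\{i_{2s}i_1,i_{2s-1}i_2,\dots,i_{s+1}i_s\}$ ($s=|B^0|$; unique) such that, if $s\ge1$, each of $[i_1+1,i_2-1],\dots,[i_{s-1}+1,i_s-1],[i_{s+1}+1,i_{s+2}-1],\dots,[i_{2s-1}+1,i_{2s}-1]$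 is $0$-covered by $B^1$. Let $\mathcal X^+_{M-2}$ be the set of $B\in{}^*\mathcal P_M$ such that $M\notin\mathrm{supp}(B)$ and either $s=0$, or $s$ is odd and either (i) $[1,i_1-1]$ is $1$-covered and $[i_{2s}+1,M-1]$ is $0$-covered by $B^1$, or (ii) $[1,i_1-1]$ is $0$-covered and $[i_{2s}+1,M-1]$ is $1$-covered by $B^1$. For $B\in\mathcal X^+_{M-2}$ with $s\ge1$ there is a unique $u_B$: in case (i), $u_B\in[1,i_1-1]$ with $[1,u_B-1]$, $[u_B+1,i_1-1]$ $0$-covered by $B^1$ ($u_B$ odd); in case (ii), $u_B\in[i_{2s}+1,M-1]$ with $[i_{2s}+1,u_B-1]$, $[u_B+1,M-1]$ $0$-covered by $B^1$ ($u_B$ even). Let ${}'\mathcal X^+_{M-2}$ be the set of $B\in\mathcal X^+_{M-2}$ such that either ($|B^0|=0$ and $M-1\notin\mathrm{supp}(B)$) or ($|B^0|\ge1$ and $u_B$ even). For odd $M\ge5$ and $k\in[1,M-1]$ let $\iota_k:[1,M-2]\to[1,M]$ be $\iota_k(i)=i$ for $i<k$ and $\iota_k(i)=i+2$ for $i\ge k$, and let $I_k:\mathcal P_{M-2}\to\mathcal P_M$ send $B$ to $\{\{\iota_k(a),\iota_k(b)\}:\{a,b\}\in B\}\cup\{\{k,k+1\}\}$. Let ${}'Pr^+_{M-2}\subseteq\mathcal P_M$ consist of $\emptyset$ and of the sets $\{\{M-2,1\},\{M-3,2\},\dots,\{M-\tau,\tau-1\}\}$ for even $\tau\in[2,(M-1)/2]$.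 Define ${}^\sharp\mathcal X^+_{M-2}\subseteq\mathcal P_M$ recursively: ${}^\sharp\mathcal X^+_1=\{\emptyset\}\subseteq\mathcal P_3$; for $M\ge5$, $B\in\mathcal P_M$ lies in ${}^\sharp\mathcal X^+_{M-2}$ iff either $B\in{}'Pr^+_{M-2}$, or $|B^0|>0$ and $B=I_k(B')$ for some $B'\in{}^\sharp\mathcal X^+_{M-4}$ and $k\in[1,M-2]$, or $|B^0|=0$ and $B=I_k(B')$ for some $B'\in{}^\sharp\mathcal X^+_{M-4}$ and $k\in[1,M-3]$. *)

(* Defs.v *)
From HB Require Import structures.
From mathcomp Require Import all_boot finmap.

Set Implicit Arguments.
Unset Strict Implicit.
Unset Printing Implicit Defensive.

Local Open Scope fset_scope.

Notation pairset := {fset {fset nat}} (only parsing).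

Definition in_P (M : nat) (B : {fset {fset nat}}) : Prop :=
  (forall X, X \in B -> #|` X| = 2 /\ (forall h, h \in X -> 1 <= h <= M)) /\
  (forall X Y, X \in B -> Y \in B -> X != Y -> X `&` Y = fset0).

Definition in_supp (B : {fset {fset nat}}) (h : nat) : Prop :=
  exists2 X, X \in B & h \in X.

Definition inB1 (B : {fset {fset nat}}) (i j : nat) : Prop :=
  [/\ i < j, odd (j - i) & [fset i; j] \in B].

Definition inB0 (B : {fset {fset nat}}) (i j : nat) : Prop :=
  [/\ j < i, ~~ odd (i - j) & [fset i; j] \in B].

Definition B0_nonempty (B : {fset {fset nat}}) : Prop :=
  exists i j, inB0 B i j.

Definition B1_intervals (B : {fset {fset nat}}) (s : seq (nat * nat)) : Prop :=
  (forall p, p \in s -> inB1 B p.1 p.2) /\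
  pairwise (fun p q : nat * nat => (p.2 < q.1) || (q.2 < p.1)) s.

Definition covered0 (B : {fset {fset nat}}) (i j : nat) : Prop :=
  exists s : seq (nat * nat), B1_intervals B s /\
    (forall h, (i <= h <= j) <-> exists2 p, p \in s & p.1 <= h <= p.2).

Definition covered1 (B : {fset {fset nat}}) (i j : nat) : Prop :=
  exists u, exists s : seq (nat * nat), B1_intervals B s /\
    (forall p, p \in s -> ~~ (p.1 <= u <= p.2)) /\
    (forall h, (i <= h <= j) <-> (h = u \/ exists2 p, p \in s & p.1 <= h <= p.2)).

(* The sequence (i_1,...,i_{2s}) = (f 1, ..., f (2s)) describing B^0 as in the
   definition of *P_M: B^0 = {i_{2s}i_1, ..., i_{s+1}i_s}, the sequence being
   strictly increasing (this is what makes it unique), with the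
   gaps [i_r+1, i_{r+1}-1] (r ≠ s) 0-covered by B^1. *)
Definition star_seq (B : {fset {fset nat}}) (s : nat) (f : nat -> nat) : Prop :=
  [/\ (forall r, 1 <= r <= s -> inB0 B (f (s.*2.+1 - r)) (f r)),
      (forall i j, inB0 B i j ->
         exists r, [/\ 1 <= r <= s, i = f (s.*2.+1 - r) & j = f r]),
      (forall r, 1 <= r < s.*2 -> f r < f r.+1),
      (forall r, 1 <= r < s -> covered0 B (f r).+1 (f r.+1).-1) &
      (forall r, s.+1 <= r < s.*2 -> covered0 B (f r).+1 (f r.+1).-1)].

Definition in_starP (M : nat) (B : {fset {fset nat}}) : Prop :=
  [/\ in_P M B,
      (forall i j, inB1 B i j -> covered0 B i.+1 j.-1) &
      exists s f, star_seq B s f].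

Definition in_Xplus (M : nat) (B : {fset {fset nat}}) : Prop :=
  [/\ in_starP M B, ~ in_supp B M &
      exists s f, star_seq B s f /\
        (s = 0 \/
         (odd s /\
          ((covered1 B 1 (f 1).-1 /\ covered0 B (f s.*2).+1 M.-1) \/
           (covered0 B 1 (f 1).-1 /\ covered1 B (f s.*2).+1 M.-1))))].

Definition is_uB (M : nat) (B : {fset {fset nat}}) (s : nat) (f : nat -> nat)
    (u : nat) : Prop :=
  [/\ covered0 B (f s.*2).+1 M.-1, 1 <= u <= (f 1).-1,
      covered0 B 1 u.-1 & covered0 B u.+1 (f 1).-1]
  \/
  [/\ covered0 B 1 (f 1).-1, (f s.*2).+1 <= u <= M.-1,
      covered0 B (f s.*2).+1 u.-1 & covered0 B u.+1 M.-1].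

Definition in_Xplus' (M : nat) (B : {fset {fset nat}}) : Prop :=
  in_Xplus M B /\
  ((~ B0_nonempty B /\ ~ in_supp B M.-1) \/
   (B0_nonempty B /\
    exists s f u, [/\ star_seq B s f, 1 <= s, is_uB M B s f u & ~~ odd u])).

Definition iota_k (k i : nat) : nat := if i < k then i else i.+2.

Definition I_k (k : nat) (B : {fset {fset nat}}) : {fset {fset nat}} :=
  [fset [fset iota_k k h | h in X] | X : {fset nat} in B] `|` [fset [fset k; k.+1]].

Definition in_Pr (M : nat) (B : {fset {fset nat}}) : Prop :=
  B = fset0 \/
  exists tau, [/\ ~~ odd tau, 2 <= tau <= (M.-1)./2 &
     B = [fset [fset M - r.+1; r] | r : nat in iota 1 tau.-1]].

(* sharp_aux k B  <->  B ∈ #X^+_{M-2} with M = 2k+3 *)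
Fixpoint sharp_aux (k : nat) (B : {fset {fset nat}}) : Prop :=
  match k with
  | 0 => B = fset0
  | k'.+1 =>
      let M := k.*2.+3 in
      in_P M B /\
      (in_Pr M B \/
       exists B' j, [/\ sharp_aux k' B', B = I_k j B' &
          ((B0_nonempty B /\ 1 <= j <= M - 2) \/
           (~ B0_nonempty B /\ 1 <= j <= M - 3))])
  end.

Definition in_sharpXplus (M : nat) (B : {fset {fset nat}}) : Prop :=
  sharp_aux (M - 3)./2 B.

(* Main.v *)
Require Import Defs.
From HB Require Import structures.
From mathcomp Require Import all_boot finmap zify.
From Stdlib Require Import Classical.
Set Implicit Arguments. Unset Strict Implicit. Unset Printing Implicit Defensive.
Local Open Scope fset_scope.

Definition dec (k h : nat) : nat := if h < k then h else h - 2.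

Section Arith.
Variable k : nat.
Local Notation io := (iota_k k).
Lemma iotaK h : dec k (io h) = h.
Proof. rewrite /dec /iota_k; case: (ltnP h k) => H; case: ifP; lia. Qed.
Lemma decK h : h != k -> h != k.+1 -> io (dec k h) = h.
Proof. rewrite /dec /iota_k => H1 H2; case: (ltnP h k) => H; case: ifP; lia. Qed.
Lemma io_lt a b : (io a < io b) = (a < b).
Proof. rewrite /iota_k; case: (ltnP a k) => H; case: (ltnP b k) => H'; apply/idP/idP; lia. Qed.
Lemma io_le a b : (io a <= io b) = (a <= b).
Proof. rewrite /iota_k; case: (ltnP a k) => H; case: (ltnP b k) => H'; apply/idP/idP; lia. Qed.
Lemma io_inj : injective io.
Proof. by move=> a b /(congr1 (dec k)); rewrite !iotaK. Qed.
Lemma io_neq h : io h != k /\ io h != k.+1.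
Proof. rewrite /iota_k; case: (ltnP h k) => H; split; apply/eqP; lia. Qed.
Lemma io_odd a b : odd (io b - io a) = odd (b - a).
Proof. rewrite /iota_k; case: (ltnP a k) => H; case: (ltnP b k) => H' //.
- rewrite !subSn ?negbK //; lia.
- have -> : b - a.+2 = 0 by lia. by have -> : b - a = 0 by lia.
Qed.
Lemma io0 : 0 < k -> io 0 = 0.
Proof. by rewrite /iota_k => ->. Qed.
Lemma io_ge h : h <= io h <= h.+2.
Proof. rewrite /iota_k; case: (ltnP h k) => H; lia. Qed.
Lemma io_pred y : 0 < k -> y != k -> io y.-1 = (io y).-1.
Proof. rewrite /iota_k => H1 H2; case: (ltnP y k) => H; case: ifP; lia. Qed.
Lemma dec_pred y : 0 < k -> dec k (io y).-1 = y.-1.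
Proof. rewrite /iota_k /dec => H1; case: (ltnP y k) => H; case: ifP; lia. Qed.
Lemma io_big h : k <= h -> io h = h.+2.
Proof. by rewrite /iota_k ltnNge => ->. Qed.
Lemma io_small h : h < k -> io h = h.
Proof. by rewrite /iota_k => ->. Qed.
End Arith.

Definition img k (X : {fset nat}) : {fset nat} := [fset iota_k k h | h in X].

Lemma img_mem k (X : {fset nat}) h : (iota_k k h \in img k X) = (h \in X).
Proof. by rewrite /img mem_imfset //; apply: io_inj. Qed.

Lemma img_inj k : injective (img k).
Proof. move=> X Y E; apply/fsetP => h; by rewrite -(img_mem k X h) -(img_mem k Y h) E. Qed.

Lemma img2 k a b : img k [fset a; b] = [fset iota_k k a; iota_k k b].
Proof.
apply/fsetP => h; apply/imfsetP/idP => [[x /= + ->]|].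
- by rewrite !inE => /orP[]/eqP->; rewrite eqxx ?orbT.
- by rewrite !inE => /orP[]/eqP->; [exists a|exists b]; rewrite //= !inE eqxx ?orbT.
Qed.

Lemma img_notk k (X : {fset nat}) h : h \in img k X -> h != k /\ h != k.+1.
Proof. by case/imfsetP => x _ ->; apply: io_neq. Qed.

Lemma Ik_img k (B : {fset {fset nat}}) (X : {fset nat}) : (img k X \in I_k k B) = (X \in B).
Proof.
rewrite /I_k in_fsetU in_fset1.
have -> : (img k X == [fset k; k.+1]) = false.
  apply/negbTE/negP => /eqP E.
  have : k \in img k X by rewrite E !inE eqxx.
  by case/img_notk => /eqP.
rewrite orbF; apply/imfsetP/idP => [[Y YB /img_inj ->]|XB] //; by exists X.
Qed.

Lemma Ik_k k (B : {fset {fset nat}}) (Y : {fset nat}) : (k \in Y) || (k.+1 \in Y) -> (Y \in I_k k B) = (Y == [fset k; k.+1]).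
Proof.
move=> H; rewrite /I_k in_fsetU in_fset1.
case: (Y == _); rewrite ?orbT ?orbF //; apply/negbTE/negP => /imfsetP [X _ E].
move: H; rewrite E => /orP [] /img_notk []; rewrite eqxx //.
Qed.

Lemma Ik_cases k (B : {fset {fset nat}}) (Y : {fset nat}) : Y \in I_k k B -> Y = [fset k; k.+1] \/ exists2 X, X \in B & Y = img k X.
Proof.
rewrite /I_k in_fsetU in_fset1 => /orP [/imfsetP [X XB ->]|/eqP ->]; [right|left] => //.
by exists X.
Qed.

Lemma fset2_eq (a b c d : nat) : [fset a; b] = [fset c; d] -> (a = c /\ b = d) \/ (a = d /\ b = c).
Proof.
move=> E.
have H1 : a \in [fset c; d] by rewrite -E !inE eqxx.
have H2 : b \in [fset c; d] by rewrite -E !inE eqxx orbT.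
have H3 : c \in [fset a; b] by rewrite E !inE eqxx.
have H4 : d \in [fset a; b] by rewrite E !inE eqxx orbT.
move: H1 H2 H3 H4; rewrite !inE => /orP[]/eqP ? /orP[]/eqP ? /orP[]/eqP ? /orP[]/eqP ?; lia.
Qed.

Lemma pair_dec k a b : a != k -> a != k.+1 -> b != k -> b != k.+1 ->
  [fset a; b] = img k [fset dec k a; dec k b].
Proof. by move=> *; rewrite img2 !decK. Qed.

Section IkB.
Variables (k : nat) (B : {fset {fset nat}}).
Local Notation io := (iota_k k).
Local Notation BB := (I_k k B).

Lemma inB1_io a b : inB1 BB (io a) (io b) <-> inB1 B a b.
Proof. by rewrite /inB1 -img2 Ik_img io_lt io_odd. Qed.
Lemma inB0_io a b : inB0 BB (io a) (io b) <-> inB0 B a b.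
Proof. by rewrite /inB0 -img2 Ik_img io_lt io_odd. Qed.

Lemma pair_k a b : [fset a; b] \in BB -> (a == k) || (a == k.+1) || (b == k) || (b == k.+1) ->
  (a = k /\ b = k.+1) \/ (a = k.+1 /\ b = k).
Proof.
move=> Hm H; have Hk : (k \in [fset a; b]) || (k.+1 \in [fset a; b]).
  by rewrite !inE; move: H; case/orP=> [/orP[/orP[]|]|] /eqP->; rewrite eqxx ?orbT.
by move: Hm; rewrite (Ik_k _ Hk) => /eqP/fset2_eq.
Qed.

Lemma inB1_I a b : inB1 BB a b -> (a = k /\ b = k.+1) \/
  exists a' b', [/\ a = io a', b = io b' & inB1 B a' b'].
Proof.
move=> H; case: (boolP ((a == k) || (a == k.+1) || (b == k) || (b == k.+1))) => Hk.
  left; case: H => H1 H2 H3; case: (pair_k H3 Hk) => [] [] ? ?; lia.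
right; exists (dec k a), (dec k b).
move: Hk; rewrite !negb_or => /andP[/andP[/andP[? ?] ?] ?].
by rewrite !decK //; split => //; apply/inB1_io; rewrite !decK.
Qed.

Lemma inB0_I a b : inB0 BB a b -> exists a' b', [/\ a = io a', b = io b' & inB0 B a' b'].
Proof.
move=> H; case: (boolP ((a == k) || (a == k.+1) || (b == k) || (b == k.+1))) => Hk.
  case: H => H1 H2 H3; case: (pair_k H3 Hk) => [] [] ? ?; subst; [by move: H1; rewrite ltnNge leqnSn | by move: H2; rewrite subSnn].
exists (dec k a), (dec k b).
move: Hk; rewrite !negb_or => /andP[/andP[/andP[? ?] ?] ?].
by rewrite !decK //; split => //; apply/inB0_io; rewrite !decK.
Qed.

Lemma inB1_kk : inB1 BB k k.+1.
Proof. by split => //; [rewrite subSnn|rewrite /I_k !inE eqxx orbT]. Qed.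

Lemma supp_io h : in_supp BB (io h) <-> in_supp B h.
Proof.
split.
- case=> X /Ik_cases [->|[X' X'B ->]].
  + by rewrite !inE => /orP[]/eqP E; have := io_neq k h; rewrite E eqxx; case.
  + by rewrite img_mem => ?; exists X'.
- case=> X XB hX; exists (img k X); by rewrite ?Ik_img ?img_mem.
Qed.

Lemma supp_k : in_supp BB k.+1.
Proof. by exists [fset k; k.+1]; rewrite /I_k !inE eqxx ?orbT. Qed.

End IkB.

Definition rdisj := (fun p q : nat * nat => (p.2 < q.1) || (q.2 < p.1)).

Lemma pairwise_mem (s : seq (nat * nat)) p q : pairwise rdisj s -> p \in s -> q \in s -> p != q ->
  (p.2 < q.1) \/ (q.2 < p.1).
Proof.
elim: s => // x s IH; rewrite pairwise_cons => /andP [Hall Hpw].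
rewrite !inE => Hp Hq Hpq.
case: (eqVneq p x) => [Epx|Npx].
- subst x; case/orP: Hq => [/eqP Eq|Hq]; first by rewrite Eq eqxx in Hpq.
  by move/allP: Hall => /(_ q Hq) /orP [] ?; [left|right].
- rewrite (negbTE Npx) /= in Hp.
  case: (eqVneq q x) => [Eqx|Nqx].
  + subst x; by move/allP: Hall => /(_ p Hp) /orP [] ?; [right|left].
  + rewrite (negbTE Nqx) /= in Hq; exact: IH.
Qed.

Section Walk.
Variable B : {fset {fset nat}}.

Inductive W : nat -> nat -> Prop :=
| W0 g : W g g
| WS g c g' : inB1 B g.+1 c -> W c g' -> W g g'.

Lemma W_le g g' : W g g' -> g <= g'.
Proof. elim => // g0 c g1 [H1 _ _] _; lia. Qed.

Lemma W_trans a b c : W a b -> W b c -> W a c.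
Proof. elim => // g c0 g' H _ IH Hc; apply: WS H (IH Hc). Qed.

Lemma cov0_empty i j : j < i -> covered0 B i j.
Proof.
move=> H; exists [::]; split; first by split => // p; rewrite in_nil.
move=> h; split; [lia| by case].
Qed.

Lemma tiles_in (s : seq (nat * nat)) i j : (forall p, p \in s -> inB1 B p.1 p.2) ->
  (forall h, i <= h <= j <-> exists2 p, p \in s & p.1 <= h <= p.2) ->
  forall p, p \in s -> [/\ i <= p.1, p.2 <= j & p.1 < p.2].
Proof.
move=> Hs Hu p ps; have [H1 _ _] := Hs p ps.
have /Hu A1 : exists2 q, q \in s & q.1 <= p.1 <= q.2 by exists p => //; lia.
have /Hu A2 : exists2 q, q \in s & q.1 <= p.2 <= q.2 by exists p => //; lia.
split; lia.
Qed.

Lemma W_cov0 x y : W x y -> covered0 B x.+1 y.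
Proof.
elim => [g|g c g' H Wc [s [[Hs Hpw] Hu]]]; first by apply: cov0_empty.
have Hcg := W_le Wc; have [H1 _ _] := H.
have Ht := tiles_in Hs Hu.
exists ((g.+1, c) :: s); split; first split.
- by move=> p; rewrite inE => /orP[/eqP->|/Hs].
- rewrite pairwise_cons Hpw andbT; apply/allP => [[q1 q2]] qs /=.
  by have /= [? ? ?] := Ht _ qs; apply/orP; left; lia.
- move=> h; split => [Hh|[p]].
  + case: (leqP h c) => Hhc; first by exists (g.+1, c); rewrite ?inE ?eqxx //=; lia.
    have [|p ps Hp] := (Hu h).1; first lia.
    by exists p; rewrite ?inE ?ps ?orbT.
  + case: p => p1 p2; rewrite inE => /orP[/eqP[-> ->]/=|ps /= Hp]; first lia.
    have /= [? ? ?] := Ht _ ps; lia.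
Qed.

Lemma cov0_W n x y : y - x < n -> x <= y -> covered0 B x.+1 y -> W x y.
Proof.
elim: n x => [|n IH] x; first lia.
move=> Hn Hxy [s [[Hs Hpw] Hu]].
case: (eqVneq x y) => [->|Nxy]; first by apply: W0.
have Ht := tiles_in Hs Hu.
have [|[p1 p2] ps /= Hp] := (Hu x.+1).1; first lia.
have /= [T1 T2 T3] := Ht _ ps.
have Ep : p1 = x.+1 by lia.
apply: (@WS x p2); first by rewrite -Ep; apply: (Hs _ ps).
apply: IH; [lia|lia|].
exists [seq q <- s | p2 < q.1]; split; first split.
- by move=> q; rewrite mem_filter => /andP[_ /Hs].
- exact: pairwise_filter.
- move=> h; split => [Hh|[q]].
  + have [|[q1 q2] qs Hq] := (Hu h).1; first lia.
    exists (q1, q2) => //; rewrite mem_filter qs andbT /=.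
    case: (eqVneq (q1, q2) (p1, p2)) => [[Eq1 Eq2]|Nqp]; first by subst; simpl in *; lia.

    have /= [? ? ?] := Ht _ qs.
    case: (pairwise_mem Hpw qs ps Nqp) => /= ?; lia.
  + case: q => q1 q2; rewrite mem_filter => /andP[/= Hq qs] /= Hh.
    have /= [? ? ?] := Ht _ qs; lia.
Qed.

Lemma cov0W x y : x <= y -> covered0 B x.+1 y <-> W x y.
Proof. move=> H; split; [exact: (@cov0_W (y - x).+1)|exact: W_cov0]. Qed.

Lemma cov1E i j : 0 < i -> covered1 B i j <->
  exists u, [/\ i <= u <= j, covered0 B i u.-1 & covered0 B u.+1 j].
Proof.
move=> Hi; split.
- case=> u [s [[Hs Hpw] [Hnu Hu]]].
  have Hs' : forall p, p \in s -> inB1 B p.1 p.2 by [].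
  have Hup : i <= u <= j by apply/(Hu u).2; left.
  have Hnu' : forall p, p \in s -> p.2 < u \/ u < p.1.
    by move=> p /Hnu; rewrite negb_and -!ltnNge => /orP[]; [right|left].
  have Hpp : forall p, p \in s -> p.1 < p.2 by move=> p /Hs [].
  exists u; split => //.
  + exists [seq p <- s | p.2 < u]; split; first split.
    * by move=> q; rewrite mem_filter => /andP[_ /Hs].
    * exact: pairwise_filter.
    * move=> h; split => [Hh|[[q1 q2]]].
      - have [|E|[[q1 q2] qs /= Hq]] := (Hu h).1; first lia; first lia.
        exists (q1, q2) => //; rewrite mem_filter qs andbT /=.
        case: (Hnu' _ qs) => /= ?; lia.
      - rewrite mem_filter => /andP[/= Hq qs] /= Hh.
        have : i <= h <= j by apply/Hu; right; exists (q1, q2).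
        lia.
  + exists [seq p <- s | u < p.1]; split; first split.
    * by move=> q; rewrite mem_filter => /andP[_ /Hs].
    * exact: pairwise_filter.
    * move=> h; split => [Hh|[[q1 q2]]].
      - have [|E|[[q1 q2] qs /= Hq]] := (Hu h).1; first lia; first lia.
        exists (q1, q2) => //; rewrite mem_filter qs andbT /=.
        case: (Hnu' _ qs) => /= ?; lia.
      - rewrite mem_filter => /andP[/= Hq qs] /= Hh.
        have : i <= h <= j by apply/Hu; right; exists (q1, q2).
        lia.
- case=> u [Hu [s1 [[Hs1 Hpw1] Hu1]] [s2 [[Hs2 Hpw2] Hu2]]].
  have Ht1 := tiles_in Hs1 Hu1; have Ht2 := tiles_in Hs2 Hu2.
  exists u, (s1 ++ s2); split; first split.
  + by move=> p; rewrite mem_cat => /orP[/Hs1|/Hs2].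
  + rewrite pairwise_cat Hpw1 Hpw2 !andbT; apply/allrelP => [[p1 p2] [q1 q2]] ps qs /=.
    have /= [? ? ?] := Ht1 _ ps; have /= [? ? ?] := Ht2 _ qs; apply/orP; left; lia.
  + split.
    * move=> [p1 p2]; rewrite mem_cat => /orP[ps|ps]; rewrite negb_and -!ltnNge; apply/orP.
      - have /= [? ? ?] := Ht1 _ ps; right; lia.
      - have /= [? ? ?] := Ht2 _ ps; left; lia.
    * move=> h; split => [Hh|[->|[[p1 p2]]]]; first last.
      - rewrite mem_cat => /orP[ps|ps] /= Hp.
        + have /= [? ? ?] := Ht1 _ ps; lia.
        + have /= [? ? ?] := Ht2 _ ps; lia.

      - lia.
      - case: (ltngtP h u) => Hhu; last by left.
        + have [|p ps Hp] := (Hu1 h).1; first lia.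
          by right; exists p; rewrite ?mem_cat ?ps.
        + have [|p ps Hp] := (Hu2 h).1; first lia.
          by right; exists p; rewrite ?mem_cat ?ps ?orbT.
Qed.

Lemma noB1_W x y : (forall a b, ~ inB1 B a b) -> W x y -> x = y.
Proof. by move=> H; case => // g c g' /H. Qed.

End Walk.

Lemma dec_succ k g : 0 < k -> g != k -> g.+1 != k -> iota_k k (dec k g).+1 = g.+1.
Proof. rewrite /iota_k /dec => H0 H1 H2; case: (ltnP g k) => H /=; case: ifP => H'; lia. Qed.

Section Transport.
Variables (k : nat) (B : {fset {fset nat}}).
Hypothesis Hk : 0 < k.
Local Notation io := (iota_k k).
Local Notation BB := (I_k k B).

Lemma W_end_k g g' : W BB g g' -> g' = k -> g = k.
Proof.
elim => // g0 c g1 H Wc IH E; have Ec := IH E; subst c.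
case: (inB1_I H) => [[_ E']|[a' [b' [_ E' _]]]]; first lia.
by have := io_neq k b'; rewrite -E' eqxx; case.
Qed.

Lemma W_start_k g g' : W BB g g' -> g = k -> g' = k.
Proof.
elim => // g0 c g1 H Wc IH E; subst g0.
case: (inB1_I H) => [[E' _]|[a' [b' [E' _ _]]]]; first lia.
by have := io_neq k a'; rewrite -E' eqxx; case.
Qed.

Lemma T1 x y : W B x y -> W BB (io x) (io y).
Proof.
elim => [g|g c g' H Wc IH]; first exact: W0.
have H' : inB1 BB (io g.+1) (io c) by apply/inB1_io.
case: (eqVneq g.+1 k) => E.
- have Eg : io g = g by rewrite io_small //; lia.
  have Eg1 : io g.+1 = k.+2 by rewrite io_big //; lia.
  rewrite Eg; apply: (@WS _ g k.+1); first by rewrite E; apply: inB1_kk.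
  by apply: (@WS _ k.+1 (io c)) => //; rewrite -Eg1.
- have Eg : io g.+1 = (io g).+1.
    by rewrite /iota_k; case: (ltnP g k) => ?; case: ifP => ?; lia.
  by apply: (@WS _ (io g) (io c)) => //; rewrite -Eg.
Qed.

Lemma T2 g g' : W BB g g' -> g != k -> g' != k -> W B (dec k g) (dec k g').
Proof.
elim => [g0|g0 c g1 H Wc IH] Hg Hg'; first exact: W0.
case: (inB1_I H) => [[E1 E2]|[a' [b' [E1 E2 H']]]].
- subst c; have IH' := IH (ltac:(apply/eqP; lia)) Hg'.
  have -> : dec k g0 = dec k k.+1 by rewrite /dec; case: ifP; case: ifP; lia.
  exact: IH'.
- have Na : g0.+1 != k by rewrite E1; case: (io_neq k a').
  have Ea : a' = (dec k g0).+1 by apply: (@io_inj k); rewrite -E1 dec_succ.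
  apply: (@WS _ _ b'); first by rewrite -Ea.
  have -> : b' = dec k c by rewrite E2 iotaK.
  by apply: IH => //; rewrite E2; case: (io_neq k b').
Qed.

Lemma CT x y : covered0 B x.+1 y.-1 <-> covered0 BB (io x).+1 (io y).-1.
Proof.
case: (ltnP x y) => Hxy.
- have Hx' : x <= y.-1 by lia.
  have Hlt : io x < io y by rewrite io_lt.
  have Hio : io x <= (io y).-1 by lia.
  rewrite (cov0W _ Hx') (cov0W _ Hio); split.
  + move/T1; case: (eqVneq y k) => Ey.
    * subst y; rewrite (@io_small k k.-1); last lia.
      rewrite (@io_big k k) // => H; apply: (W_trans H).
      apply: (@WS _ _ k.+1); last exact: W0.
      by rewrite prednK //; apply: inB1_kk.
    * by rewrite io_pred.
  + move/T2 => H; have := H (io_neq k x).1.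
    rewrite iotaK dec_pred //; apply.
    have [_ N] := io_neq k y; apply/eqP; lia.
- split => _; apply: cov0_empty; last lia.
  have : io y <= io x by rewrite io_le.
  lia.
Qed.

Lemma u_notk a b u : a != k -> b != k -> covered0 BB a.+1 u.-1 -> covered0 BB u.+1 b ->
  a < u <= b -> u != k /\ u != k.+1.
Proof.
move=> Ha Hb H1 H2 Hu; split; apply/eqP => E; subst u.
- move: H2; rewrite cov0W; last lia.
  by move/W_start_k => /(_ erefl) E; rewrite E eqxx in Hb.
- move: H1; rewrite /= cov0W; last lia.
  by move/W_end_k => /(_ erefl) E; rewrite E eqxx in Ha.
Qed.

Lemma C1T x y : covered1 B x.+1 y.-1 <-> covered1 BB (io x).+1 (io y).-1.
Proof.
rewrite !cov1E //; split.
- case=> u [Hu H1 H2]; exists (io u); split.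
  + have A : io x < io u by rewrite io_lt; lia.
    have C : io u < io y by rewrite io_lt; lia.
    lia.
  + by apply/CT.
  + by apply/CT.
- case=> u [Hu H1 H2].
  have [Nk Nk1] : u != k /\ u != k.+1.
    apply: (u_notk _ _ H1 H2); first by case: (io_neq k x).
    + have [_ N] := io_neq k y; apply/eqP; lia.
    + lia.
  exists (dec k u); rewrite -(decK Nk Nk1) in H1 H2 Hu; split.
  + have A : io x < io (dec k u) by lia.
    have C : io (dec k u) < io y by lia.
    rewrite io_lt in A; rewrite io_lt in C; lia.

  + by apply/CT.
  + by apply/CT.
Qed.

End Transport.

Lemma card_img k (X : {fset nat}) : #|` img k X| = #|` X|.
Proof. by rewrite /img card_imfset //=; apply: io_inj. Qed.

Lemma disj_of (X Y : {fset nat}) : (forall h, h \in X -> h \in Y -> False) -> X `&` Y = fset0.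
Proof. move=> H; apply/fsetP => h; rewrite inE in_fset0; apply/negbTE/negP => /andP[]; exact: H. Qed.

Lemma disj_use (X Y : {fset nat}) h : X `&` Y = fset0 -> h \in X -> h \in Y -> False.
Proof. by move/fsetP => /(_ h); rewrite inE in_fset0 => E hX hY; rewrite hX hY in E. Qed.

Lemma SS_ext B s f g : (forall r, 0 < r <= s.*2 -> f r = g r) -> star_seq B s f -> star_seq B s g.
Proof.
move=> E [C1 C2 C3 C4 C5]; split.
- move=> r Hr; rewrite -!E; [exact: C1| lia| lia].
- move=> i j /C2 [r [Hr -> ->]]; exists r; rewrite !E //; lia.
- move=> r Hr; rewrite -!E; [exact: C3| lia| lia].
- move=> r Hr; rewrite -!E; [exact: C4| lia| lia].
- move=> r Hr; rewrite -!E; [exact: C5| lia| lia].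
Qed.

Lemma bnd a u v : (a.+1 <= u <= v.-1) = (a < u < v).
Proof. apply/idP/idP; lia. Qed.

Section Inv.
Variables (k : nat) (B : {fset {fset nat}}).
Hypothesis Hk : 0 < k.
Local Notation io := (iota_k k).
Local Notation BB := (I_k k B).

Lemma SS1 s f : star_seq B s f <-> star_seq BB s (io \o f).
Proof.
split; case => C1 C2 C3 C4 C5; split.
- by move=> r Hr /=; apply/inB0_io; apply: C1.
- move=> i j /inB0_I [a' [b' [-> -> /C2 [r [Hr -> ->]]]]]; by exists r.
- by move=> r Hr /=; rewrite io_lt; apply: C3.
- by move=> r Hr /=; apply/(CT B Hk); apply: C4.
- by move=> r Hr /=; apply/(CT B Hk); apply: C5.
- by move=> r Hr; apply/(inB0_io k); apply: C1.
- move=> i j /(inB0_io k) /C2 [r [Hr /= /io_inj -> /io_inj ->]]; by exists r.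
- by move=> r Hr; rewrite -(io_lt k); apply: C3.
- by move=> r Hr; apply/(CT B Hk); apply: C4.
- by move=> r Hr; apply/(CT B Hk); apply: C5.
Qed.

Lemma SS_ends s f : star_seq BB s f -> forall r, 0 < r <= s.*2 -> f r = io (dec k (f r)).
Proof.
case=> C1 _ _ _ _ r Hr.
case: (leqP r s) => Hrs.
- have /inB0_I [a' [b' [_ -> _]]] := C1 r (ltac:(lia)); by rewrite iotaK.
- have := C1 (s.*2.+1 - r) (ltac:(lia)).
  have -> : s.*2.+1 - (s.*2.+1 - r) = r by lia.
  by case/inB0_I => [a' [b' [-> _ _]]]; rewrite iotaK.
Qed.

Lemma SS_down s f : star_seq BB s f -> star_seq B s (dec k \o f).
Proof.
move=> H; have E := SS_ends H; apply/SS1; apply: SS_ext H => r Hr /=; exact: E r Hr.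
Qed.

Lemma io_oddu u : odd (io u) = odd u.
Proof. rewrite /iota_k; case: ifP => //= _; by rewrite negbK. Qed.

Lemma io_pos u : (0 < io u) = (0 < u).
Proof. rewrite /iota_k; case: ifP => H; apply/idP/idP; lia. Qed.

Lemma UB1 M s f u : k <= M -> is_uB M B s f u <-> is_uB M.+2 BB s (io \o f) (io u).
Proof.
move=> HM; rewrite /is_uB /=.
have EM : M.+1 = (io M).-1 by rewrite io_big.
have E0 : io 0 = 0 by rewrite io0.
rewrite EM.
have C x y := CT B Hk x y.
have C0 y := CT B Hk 0 y; rewrite E0 in C0.
have -> : (1 <= io u <= (io (f 1)).-1) = (1 <= u <= (f 1).-1).
  by rewrite !(bnd 0) io_lt io_pos.
have -> : ((io (f s.*2)).+1 <= io u <= (io M).-1) = ((f s.*2).+1 <= u <= M.-1).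
  by rewrite !bnd !io_lt.
split => [[[H1 H2 H3 H4]|[H1 H2 H3 H4]]|[[H1 H2 H3 H4]|[H1 H2 H3 H4]]]; [left|right|left|right];
  split => //; by [apply/C|apply/C0].
Qed.

Lemma UB2 M s f u : k <= M -> is_uB M.+2 BB s (io \o f) u -> u = io (dec k u).
Proof.
move=> HM; rewrite /is_uB /= => H.
have [Nk Nk1] : u != k /\ u != k.+1.
  case: H => [[_ Hb H1 H2]|[_ Hb H1 H2]].
  - apply: (u_notk (B := B) Hk (a := 0) (b := (io (f 1)).-1) _ _ H1 H2 Hb).
    + by apply/eqP; lia.
    + by have [_ N] := io_neq k (f 1); apply/eqP; lia.
  - apply: (u_notk (B := B) Hk (a := io (f s.*2)) (b := M.+1) _ _ H1 H2 Hb).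
    + by case: (io_neq k (f s.*2)).
    + by apply/eqP; lia.
by rewrite decK.
Qed.

Lemma inP_up M : k <= M -> in_P M B -> in_P M.+2 BB.
Proof.
move=> HM [P1 P2]; split.
- move=> X /Ik_cases [->|[X' X'B ->]].
  + rewrite cardfs2; split; first by case: eqVneq => //; lia.
    by move=> h; rewrite !inE => /orP[]/eqP->; lia.
  + rewrite card_img; have [C H] := P1 X' X'B; split => // h /imfsetP [h' /= h'X ->].
    have := H h' h'X; have := io_ge k h'; rewrite /iota_k; case: ifP; lia.
- move=> X Y /Ik_cases [->|[X' X'B ->]] /Ik_cases [->|[Y' Y'B ->]] NXY.
  + by rewrite eqxx in NXY.
  + apply: disj_of => h; rewrite !inE => /orP[]/eqP-> /img_notk []; rewrite eqxx //.
  + apply: disj_of => h /img_notk [] + + ; rewrite !inE => /negbTE -> /negbTE ->.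
    done.
  + have NX : X' != Y' by apply: contraNneq NXY => ->.
    have D := P2 X' Y' X'B Y'B NX.
    apply: disj_of => h /imfsetP [a /= aX ->] /imfsetP [b /= bY /io_inj Eab].
    subst b; exact: disj_use D aX bY.
Qed.

Lemma inP_down M : k <= M -> in_P M.+2 BB -> in_P M B.
Proof.
move=> HM [P1 P2]; split.
- move=> X XB; have := P1 (img k X); rewrite Ik_img => /(_ XB) [C H].
  rewrite card_img in C; split => // h hX.
  have := H (io h); rewrite img_mem => /(_ hX).
  rewrite /iota_k; case: ifP; lia.
- move=> X Y XB YB NXY.
  have NI : img k X != img k Y by apply: contraNneq NXY => /img_inj ->.
  have XB' : img k X \in BB by rewrite Ik_img.
  have YB' : img k Y \in BB by rewrite Ik_img.
  have D := P2 _ _ XB' YB' NI.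
  apply: disj_of => h hX hY; apply: (disj_use D (h := io h)); by rewrite img_mem.
Qed.

Lemma int_tr : (forall i j, inB1 BB i j -> covered0 BB i.+1 j.-1) <->
               (forall i j, inB1 B i j -> covered0 B i.+1 j.-1).
Proof.
split => H i j.
- by move/(inB1_io k)/H; rewrite -(CT B Hk).
- case/inB1_I => [[-> ->]|[a' [b' [-> -> /H]]]]; last by rewrite (CT B Hk).
  by apply: cov0_empty.
Qed.

Lemma B0_tr : B0_nonempty BB <-> B0_nonempty B.
Proof.
split.
- by case=> i [j /inB0_I [a' [b' [_ _ H]]]]; exists a', b'.
- by case=> i [j H]; exists (io i), (io j); apply/inB0_io.
Qed.

Lemma supp_tr M : k <= M -> (~ in_supp BB M.+2 <-> ~ in_supp B M).
Proof. by move=> HM; rewrite -(io_big HM) supp_io. Qed.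

Lemma supp_tr1 M : k < M -> (~ in_supp BB M.+1 <-> ~ in_supp B M.-1).
Proof.
move=> HM; have -> : M.+1 = io M.-1 by rewrite io_big; lia.
by rewrite supp_io.
Qed.

Definition Dd M B s (f : nat -> nat) :=
  s = 0 \/ (odd s /\
          ((covered1 B 1 (f 1).-1 /\ covered0 B (f s.*2).+1 M.-1) \/
           (covered0 B 1 (f 1).-1 /\ covered1 B (f s.*2).+1 M.-1))).

Lemma Dd_tr M s f : k <= M -> Dd M B s f <-> Dd M.+2 BB s (io \o f).
Proof.
move=> HM; rewrite /Dd /=.
have EM : M.+1 = (io M).-1 by rewrite io_big.
have E0 : io 0 = 0 by rewrite io0.
rewrite EM.
have C x y := CT B Hk x y.
have C0 y := CT B Hk 0 y; rewrite E0 in C0.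
have D x y := C1T B Hk x y.
have D0 y := C1T B Hk 0 y; rewrite E0 in D0.
split => [[->|[Hs [[H1 H2]|[H1 H2]]]]|[->|[Hs [[H1 H2]|[H1 H2]]]]]; try by left.
- by right; split => //; left; split; [apply/D0|apply/C].
- by right; split => //; right; split; [apply/C0|apply/D].
- by right; split => //; left; split; [apply/D0|apply/C].
- by right; split => //; right; split; [apply/C0|apply/D].

Qed.

End Inv.

Section Inv2.
Variables (k : nat) (B : {fset {fset nat}}) (M : nat).
Hypothesis Hk : 0 < k.
Hypothesis HkM : k <= M.
Local Notation io := (iota_k k).
Local Notation BB := (I_k k B).

Lemma XD_tr : (exists s f, star_seq BB s f /\ Dd M.+2 BB s f) <->
              (exists s f, star_seq B s f /\ Dd M B s f).
Proof.
split.
- case=> s [f [HS HD]]; exists s, (dec k \o f); split; first exact: SS_down.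
  apply/(Dd_tr B Hk _ _ HkM).
  case: HD => [->|[Hs HD]]; first by left.
  have E := SS_ends Hk HS.
  have Hs1 : 0 < s by case: s Hs {HS HD E}.
  have E1 : f 1 = io (dec k (f 1)) := E 1 (ltac:(lia)).
  have E2 : f s.*2 = io (dec k (f s.*2)) := E s.*2 (ltac:(lia)).
  by right; split => //; move: HD; rewrite /= -E1 -E2.
- case=> s [f [HS HD]]; exists s, (io \o f); split; first by apply/(SS1 B Hk).
  by apply/(Dd_tr B Hk _ _ HkM).
Qed.

Lemma Xu_tr : (exists s f u, [/\ star_seq BB s f, 1 <= s, is_uB M.+2 BB s f u & ~~ odd u]) <->
              (exists s f u, [/\ star_seq B s f, 1 <= s, is_uB M B s f u & ~~ odd u]).
Proof.
split.
- case=> s [f [u [HS Hs HU Hu]]].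
  have E := SS_ends Hk HS.
  have E1 : f 1 = io (dec k (f 1)) := E 1 (ltac:(lia)).
  have E2 : f s.*2 = io (dec k (f s.*2)) := E s.*2 (ltac:(lia)).
  have HU' : is_uB M.+2 BB s (io \o (dec k \o f)) u by move: HU; rewrite /is_uB /= -E1 -E2.
  have Eu := UB2 Hk HkM HU'.
  exists s, (dec k \o f), (dec k u); split => //; first exact: SS_down.
  + by apply/(UB1 B Hk _ _ _ HkM); rewrite -Eu.
  + by rewrite -(io_oddu k) -Eu.
- case=> s [f [u [HS Hs HU Hu]]]; exists s, (io \o f), (io u); split => //.
  + by apply/(SS1 B Hk).
  + by apply/(UB1 B Hk _ _ _ HkM).
  + by rewrite io_oddu.
Qed.

End Inv2.

Theorem inv_thm M k B : 0 < k <= M -> (B0_nonempty B \/ k < M) ->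
  in_Xplus' M.+2 (I_k k B) <-> in_Xplus' M B.
Proof.
case/andP => Hk HkM HB.
rewrite /in_Xplus' /in_Xplus /in_starP.
have XD := XD_tr B Hk HkM; rewrite /Dd in XD.
have Xu := Xu_tr B Hk HkM.
have B0 := B0_tr k B.
split.
- case => [[[HP Hint [s0 [f0 HS0]]] Hsupp HX] Hx].
  split; first split; first split.
  + exact: inP_down HkM HP.
  + exact: (int_tr B Hk).1 Hint.
  + by exists s0, (dec k \o f0); apply: SS_down.
  + exact: (supp_tr B HkM).1 Hsupp.
  + exact: XD.1 HX.
  + case: Hx => [[HnB Hs]|[HB0 HU]].
    * have HkM' : k < M by case: HB => // /B0.
      by left; split; [move=> /B0 | exact: (supp_tr1 B Hk HkM').1 Hs].
    * by right; split; [apply/B0|apply/Xu].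
- case => [[[HP Hint [s0 [f0 HS0]]] Hsupp HX] Hx].
  split; first split; first split.
  + exact: inP_up HkM HP.
  + exact: (int_tr B Hk).2 Hint.
  + by exists s0, (iota_k k \o f0); apply/(SS1 B Hk).
  + exact: (supp_tr B HkM).2 Hsupp.
  + exact: XD.2 HX.
  + case: Hx => [[HnB Hs]|[HB0 HU]].
    * have HkM' : k < M by case: HB.
      by left; split; [move=> /B0|exact: (supp_tr1 B Hk HkM').2 Hs].
    * by right; split; [apply/B0|apply/Xu].
Qed.

Lemma fset2C (a b : nat) : [fset a; b] = [fset b; a].
Proof. by rewrite fsetUC. Qed.

Lemma fcard2 (X : {fset nat}) : #|` X| = 2 -> exists a b, a < b /\ X = [fset a; b].
Proof.
move=> C.
have : X != fset0 by rewrite -cardfs_eq0 C.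
case/fset0Pn => x xX.
have E := cardfsD1 x X; rewrite xX C /= in E.
have C1 : #|` X `\ x| == 1 by rewrite -(eqn_add2l 1) -E.
case/cardfs1P: C1 => y Ey.
have yX : y \in X `\ x by rewrite Ey inE.
have Nxy : y != x by move: yX; rewrite in_fsetD1 => /andP[-> _].
have EX : X = [fset x; y] by rewrite -Ey fsetD1K.
case: (ltngtP x y) => H.
- by exists x, y.
- by exists y, x; rewrite EX fset2C.
- by rewrite H eqxx in Nxy.
Qed.

Lemma empty_of M B : in_P M B -> (forall a b, ~ inB1 B a b) -> (forall a b, ~ inB0 B a b) -> B = fset0.
Proof.
move=> [P1 _] N1 N0; apply/fsetP => X; rewrite in_fset0; apply/negbTE/negP => XB.
have [C _] := P1 X XB; have [a [b [Hab EX]]] := fcard2 C; subst X.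
case: (boolP (odd (b - a))) => Ho.
- by apply: (N1 a b); split.
- by apply: (N0 b a); split => //; rewrite fset2C.
Qed.

Lemma W_inv B x y : W B x y -> x = y \/ exists c, inB1 B x.+1 c /\ W B c y.
Proof. case => [g|g c g' H Hw]; [by left|right; by exists c]. Qed.

Lemma adj B : (forall i j, inB1 B i j -> covered0 B i.+1 j.-1) ->
  forall n a b, b - a < n -> inB1 B a b -> exists j, inB1 B j j.+1.
Proof.
move=> Hint; elim => [|n IH] a b Hn Hab; first lia.
have [H1 _ _] := Hab.
have := Hint a b Hab; rewrite cov0W; last lia.
case/W_inv => [E|[c [Hc Hw]]].
- by exists a; have -> : a.+1 = b by lia.
- have := W_le Hw; have [Hc1 _ _] := Hc => Hcb.
  apply: (IH a.+1 c) => //; lia.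
Qed.

Lemma inP_pair M B a b : in_P M B -> [fset a; b] \in B -> 1 <= a <= M /\ 1 <= b <= M.
Proof.
case=> P1 _ H; have [_ P] := P1 _ H.
by split; apply: P; rewrite !inE eqxx ?orbT.
Qed.

Lemma adjacency M B a b : in_Xplus' M B -> inB1 B a b ->
  exists j, [/\ [fset j; j.+1] \in B, 0 < j, j.+1 < M & (~ B0_nonempty B -> j.+2 < M)].
Proof.
case => [[[HP Hint _] Hsupp _] Hx] Hab.
have [j [_ _ Hj]] := adj Hint (n := (b - a).+1) (ltnSn _) Hab.
have [Hj1 Hj2] := inP_pair HP Hj.
have NM : j.+1 != M.
  by apply/eqP => E; apply: Hsupp; exists [fset j; j.+1] => //; rewrite E !inE eqxx orbT.
exists j; split => //; [lia|lia|].
move=> HnB; case: Hx => [[_ Hs]|[HB _]] //.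
have NM1 : j.+1 != M.-1.
  by apply/eqP => E; apply: Hs; exists [fset j; j.+1] => //; rewrite -E !inE eqxx orbT.
lia.
Qed.

Lemma decomp M B j : in_P M B -> [fset j; j.+1] \in B -> 0 < j ->
  exists B', B = I_k j B'.
Proof.
move=> [P1 P2] Hj Hj0.
set JJ := [fset j; j.+1].
exists [fset [fset dec j h | h in X] | X : {fset nat} in B `\ JJ].
have Key : forall X, X \in B -> X != JJ -> img j [fset dec j h | h in X] = X.
  move=> X XB NX; have D := P2 X JJ XB Hj NX.
  apply/fsetP => h; apply/imfsetP/idP => [[h1 /imfsetP [h2 /= h2X ->] ->]|hX].
  - rewrite decK //; apply/negP => /eqP E; subst h2; apply: (disj_use D h2X);
      by rewrite !inE eqxx ?orbT.
  - exists (dec j h); first by apply/imfsetP; exists h.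
    rewrite decK //; apply/negP => /eqP E; subst h; apply: (disj_use D hX);
      by rewrite !inE eqxx ?orbT.
apply/fsetP => Y; rewrite /I_k -/JJ in_fsetU in_fset1.
case: (eqVneq Y JJ) => [->|NY]; first by rewrite orbT Hj.
rewrite orbF; apply/idP/imfsetP => [YB|[X' /imfsetP [X /= + ->] ->]].
- exists [fset dec j h | h in Y]; last by symmetry; exact: (Key Y YB NY).
  by apply/imfsetP; exists Y => //=; rewrite in_fsetD1 NY.
- rewrite in_fsetD1 => /andP [NX XB]; by have := Key X XB NX; rewrite /img => ->.
Qed.

Lemma SS0 B f : (forall i j, ~ inB0 B i j) -> star_seq B 0 f.
Proof. by move=> N; split => [r|i j /N|r|r|r] //; lia. Qed.

Lemma X_empty M : in_Xplus' M fset0.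
Proof.
have N0 : forall i j, ~ inB0 fset0 i j by move=> i j [_ _]; rewrite in_fset0.
have NS : forall h, ~ in_supp fset0 h by move=> h [X]; rewrite in_fset0.
split; first split; first split.
- by split => X; rewrite in_fset0.
- by move=> i j [_ _]; rewrite in_fset0.
- by exists 0, id; apply: SS0.
- exact: NS.
- by exists 0, id; split; [apply: SS0|left].
- by left; split => //; case=> i [j /N0].
Qed.

Section Pr.
Variables (m s : nat).
Hypothesis Hs : odd s.
Hypothesis Hsm : s <= m.
Local Notation M := (m.*2.+3).
Local Notation PB := [fset [fset M - r.+1; r] | r : nat in iota 1 s].

Lemma memPB X : X \in PB <-> exists2 r, 1 <= r <= s & X = [fset M - r.+1; r].
Proof.
split => [/imfsetP [r /= + ->]|[r Hr ->]].
- by rewrite mem_iota => Hr; exists r => //; lia.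
- by apply/imfsetP; exists r => //=; rewrite mem_iota; lia.
Qed.

Lemma pairPB a b : [fset a; b] \in PB -> a < b -> exists r, [/\ 1 <= r <= s, a = r & b = M - r.+1].
Proof.
case/memPB => r Hr /fset2_eq E Hab; exists r; split => //; lia.
Qed.

Definition fPr r := if r <= s then r else M - (s.*2.+2 - r).

Lemma fL r : r <= s -> fPr r = r.
Proof. by rewrite /fPr => ->. Qed.
Lemma fU r : s < r -> fPr r = M - (s.*2.+2 - r).
Proof. by move=> H; rewrite /fPr leqNgt H. Qed.

Lemma noB1PB a b : ~ inB1 PB a b.
Proof. case=> Hab Ho /pairPB /(_ Hab) [r [Hr Ea Eb]]; subst; move: Ho; rewrite -subnDA; lia. Qed.

Lemma SSPr : star_seq PB s fPr.
Proof.
have H1 : 0 < s by case: (s) Hs.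
split.
- move=> r Hr; rewrite (@fL r) ?(@fU (s.*2.+1 - r)); try lia.
  split; first lia; first lia.
  apply/memPB; exists r => //; congr [fset _; _]; lia.
- move=> i j [Hij _]; rewrite fset2C => /pairPB /(_ Hij) [r [Hr Ej Ei]]; exists r; split => //.
  + by rewrite (@fU (s.*2.+1 - r)); lia.
  + by rewrite (@fL r); lia.
- move=> r Hr; case: (ltngtP r s) => E.
  + by rewrite (@fL r) ?(@fL r.+1); lia.
  + by rewrite (@fU r) ?(@fU r.+1); lia.
  + by rewrite (@fL r) ?(@fU r.+1); lia.
- move=> r Hr; rewrite (@fL r) ?(@fL r.+1); try lia; apply: cov0_empty; lia.
- move=> r Hr; rewrite (@fU r) ?(@fU r.+1); try lia; apply: cov0_empty; lia.
Qed.

Lemma Pr_X : in_Xplus' M PB.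
Proof.
have H1 : 0 < s by case: (s) Hs.
have Ef1 : fPr 1 = 1 by rewrite fL.
have Ef2 : fPr s.*2 = M - 2 by rewrite fU; lia.
have NS : ~ in_supp PB M.
  case=> X /memPB [r Hr ->]; rewrite !inE => /orP[]/eqP; lia.
have C1 : covered0 PB 1 (fPr 1).-1 by rewrite Ef1; apply: cov0_empty.
have C2 : covered1 PB (fPr s.*2).+1 M.-1.
  rewrite Ef2 cov1E; last lia.
  exists M.-1; split; [lia|apply: cov0_empty; lia|apply: cov0_empty; lia].
split; first split; first split.
- split.
  + move=> X /memPB [r Hr ->]; split; first by rewrite cardfs2; case: eqVneq => //; lia.
    by move=> h; rewrite !inE => /orP[]/eqP ->; lia.
  + move=> X Y /memPB [r Hr ->] /memPB [r' Hr' ->] N.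
    apply: disj_of => h; rewrite !inE => /orP[]/eqP -> /orP[]/eqP E; try lia;
      by move: N; rewrite (_ : r = r') ?eqxx //; lia.
- by move=> i j /noB1PB.
- by exists s, fPr; apply: SSPr.
- exact: NS.
- exists s, fPr; split; first exact: SSPr.
  by right; split => //; right.
- right; split.
  + exists (fPr s.*2), (fPr 1); have [C _ _ _ _] := SSPr.
    by have := C 1 (ltac:(lia)); rewrite subn1.
  + exists s, fPr, M.-1; split => //; first exact: SSPr.
    * right; split => //; rewrite ?Ef2; [lia|apply: cov0_empty; lia|apply: cov0_empty; lia].
    * by rewrite /=; rewrite odd_double.
Qed.

End Pr.

Lemma mono (f : nat -> nat) n : (forall r, 1 <= r < n -> f r < f r.+1) ->
  forall r, 1 <= r <= n -> f 1 + r.-1 <= f r.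
Proof.
move=> H; elim => [|r IH] Hr; first lia.
case: (eqVneq r 0) => [->|Nr]; first by rewrite addn0.
have := IH (ltac:(lia)); have := H r (ltac:(lia)); lia.
Qed.

Lemma noB1_cov0 B x y : (forall a b, ~ inB1 B a b) -> x <= y -> covered0 B x.+1 y -> x = y.
Proof. by move=> N Hxy; rewrite cov0W // => /(noB1_W N). Qed.

Lemma noB1_cov1 B x y : (forall a b, ~ inB1 B a b) -> covered1 B x.+1 y -> y = x.+1.
Proof.
move=> N; rewrite cov1E // => [[u [Hu H1 H2]]].
have := noB1_cov0 N (x := x) (y := u.-1) (ltac:(lia)) H1; have := noB1_cov0 N (x := u) (y := y) (ltac:(lia)) H2; lia.
Qed.

Lemma inB0_mem M B i j : in_P M B -> inB0 B i j -> (1 <= j <= M) /\ (1 <= i <= M).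
Proof. move=> HP [_ _ H]; have [A C] := inP_pair HP H; by split. Qed.

Lemma noB1_Pr m B : in_Xplus' (m.*2.+3) B -> (forall a b, ~ inB1 B a b) -> in_Pr (m.*2.+3) B.
Proof.
move=> HX N1; case: HX => [[[HP Hint _] Hsupp [s [f [HS HD]]]] Hx].
have [C1 C2 C3 C4 C5] := HS.
case: HD => [Es|[Hs HD]].
  left; subst s; apply: (empty_of HP N1) => i j /C2 [r [Hr _ _]]; lia.
right; have H1 : 0 < s by case: (s) Hs.
have HB0 : inB0 B (f s.*2) (f 1) by have := C1 1 (ltac:(lia)); rewrite subn1.
have [Hf1 Hf2] := inB0_mem HP HB0.
have Mono := mono C3.
case: HD => [[D1 D2]|[D1 D2]].
- exfalso; have Ef1 := noB1_cov1 N1 (x := 0) D1.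
  case: Hx => [[HnB _]|[_ [s1 [f1 [u [HS1 Hs1 HU Hu]]]]]]; first by apply: HnB; exists (f s.*2), (f 1).
  case: HU => [[_ Hb H3 _]|[H3 _ _ _]].
  + have := noB1_cov0 N1 (x := 0) (y := u.-1) (ltac:(lia)) H3.
    move=> E; have Eu : u = 1 by lia.
    by rewrite Eu in Hu.
  + have := noB1_cov0 N1 (x := 0) (y := (f1 1).-1) (ltac:(lia)) H3 => E.
    have [C11 _ _ _ _] := HS1.
    have HB1 : inB0 B (f1 s1.*2) (f1 1) by have := C11 1 (ltac:(lia)); rewrite subn1.
    have [Hg1 _] := inB0_mem HP HB1.
    case: (C2 _ _ HB1) => r [Hr _ Er].
    have := Mono r (ltac:(lia)); lia.
- have Ef1 := noB1_cov0 N1 (x := 0) (y := (f 1).-1) (ltac:(lia)) D1.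
  have Ef2 := noB1_cov1 N1 D2.
  have G1 : forall r, 1 <= r < s -> f r.+1 = (f r).+1.
    move=> r Hr; have := C3 r (ltac:(lia)) => Hl.
    have := noB1_cov0 N1 (x := f r) (y := (f r.+1).-1) (ltac:(lia)) (C4 r Hr); lia.
  have G2 : forall r, s.+1 <= r < s.*2 -> f r.+1 = (f r).+1.
    move=> r Hr; have := C3 r (ltac:(lia)) => Hl.
    have := noB1_cov0 N1 (x := f r) (y := (f r.+1).-1) (ltac:(lia)) (C5 r Hr); lia.
  have Lo : forall r, 1 <= r <= s -> f r = r.
    elim => [|r IH] Hr; first lia.
    case: (eqVneq r 0) => [->|Nr]; first lia.
    rewrite G1; last lia. rewrite IH //; lia.
  have Hi : forall t, t < s -> f (s.*2 - t) = m.*2.+1 - t.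
    elim => [|t IH] Ht; first by rewrite subn0; lia.
    have E := G2 (s.*2 - t.+1) (ltac:(lia)).
    rewrite (_ : (s.*2 - t.+1).+1 = s.*2 - t) in E; last lia.
    have := IH (ltac:(lia)); lia.
  have Hup : forall r, 1 <= r <= s -> f (s.*2.+1 - r) = m.*2.+3 - r.+1.
    move=> r Hr; rewrite (_ : s.*2.+1 - r = s.*2 - r.-1); last lia.
    rewrite Hi; lia.
  have Hss : f s < f s.+1 by apply: C3; lia.
  have Hs1 : f s.+1 = m.*2.+3 - s.+1 by rewrite -Hup; [congr f; lia|lia].
  rewrite Lo in Hss; last lia.
  exists s.+1; split; [by rewrite /= negbK|lia|].
  have Hsm : s <= m by lia.
  have MP := memPB Hs Hsm.
  change (iota 1 s.+1.-1) with (iota 1 s).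
  apply/fsetP => Y; apply/idP/idP => [YB|/MP [r Hr ->]].
  + have [C _] := (HP.1) Y YB.
    have [a [b [Hab EY]]] := fcard2 C; subst Y.
    case: (boolP (odd (b - a))) => Ho; first by exfalso; apply: (N1 a b).
    have /C2 [r [Hr Eb Ea]] : inB0 B b a by split => //; rewrite fset2C.
    apply/MP; exists r => //; rewrite Eb Ea Hup ?Lo //; by rewrite fset2C.
  + have [_ _] := C1 r Hr; rewrite Hup ?Lo //.
Qed.

Lemma main k : forall B, in_Xplus' k.*2.+3 B <-> sharp_aux k B.
Proof.
elim: k => [|k IH] B.
- rewrite /=; split => [HX|->]; last exact: X_empty.
  have HX' := HX; case: HX' => [[[HP _ _] Hsupp _] _].
  have N0 : forall i j, ~ inB0 B i j.
    move=> i j H; have [Hj Hi] := inB0_mem HP H; have [Hl Ho Hm] := H.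
    have Ei : i = 3 by lia.
    apply: Hsupp; exists [fset i; j] => //; by rewrite -Ei !inE eqxx.
  apply: (empty_of HP) => // a b Hab.
  have [j [_ Hj _ Hj2]] := adjacency HX Hab.
  have : j.+2 < 3 by apply: Hj2 => [[i [j' H]]]; exact: N0 _ _ H.
  lia.
- rewrite /=; split => [HX|[HP [HPr|[B' [j [HB' -> Hj]]]]]].
  + have HX' := HX; case: HX' => [[[HP _ _] _ _] _].
    split; first exact: HP.
    case: (classic (exists a b, inB1 B a b)) => [[a [b Hab]]|NB1].
    * right; have [j [Hj Hj0 HjM HjN]] := adjacency HX Hab.
      have [B' EB] := decomp HP Hj Hj0.
      exists B', j; split => //.
      -- apply/IH; subst B; apply/(inv_thm (M := k.*2.+3)); last exact: HX.
         ++ lia.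
         ++ case: (classic (B0_nonempty (I_k j B'))) => [/(B0_tr j B')|/HjN]; [by left|right; lia].
      -- case: (classic (B0_nonempty B)) => [HB|/[dup] HB /HjN]; [left|right]; split => //; lia.
    * left; apply: noB1_Pr => // a b Hab; apply: NB1; by exists a, b.
  + case: HPr => [->|[tau [Ht Htau ->]]]; first exact: X_empty.
    have Es : tau.-1.+1 = tau by lia.
    apply: (@Pr_X k.+1 tau.-1); first by move: Ht; rewrite -Es /= negbK.
    lia.
  + have Hj1 : 0 < j <= k.*2.+3 by case: Hj => [[_ ?]|[_ ?]]; lia.
    have Hj2 : B0_nonempty B' \/ j < k.*2.+3.
      by case: Hj => [[/(B0_tr j B') HB _]|[_ ?]]; [left|right; lia].
    exact: (inv_thm Hj1 Hj2).2 ((IH B').2 HB').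
Qed.

Theorem theorem4p3 (N : nat) : odd N -> 3 <= N ->
  forall B : {fset {fset nat}}, in_Xplus' N B <-> in_sharpXplus N B.
Proof.
move=> Ho HN B; rewrite /in_sharpXplus.
have EN : N = ((N - 3)./2).*2.+3 by lia.
by rewrite {1}EN; apply: main.
Qed.
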